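(* Let $\mathcal{X},\mathcal{Y}$ be finite sets, $P_{XY}$ a distribution on $\mathcal{X}\times\mathcal{Y}$, and $\mu\ge0$. Then $$\lim_{\delta\to0}R_\mu(\delta\mid P_{XY})=R_\mu(P_{XY}).$$
   Context: For $\delta\ge0$, $\mathcal{R}^*_{\mathtt{WAK}}(\delta\mid P_{XY})$ is the set of pairs $(r_0,r_2)$ for which there exists a conditional distribution $P_{W|XY}$ with finite $\mathcal{W}$, $|\mathcal{W}|\le|\mathcal{X}||\mathcal{Y}|+2$, such that, for $(W,X,Y)\sim P_{XY}P_{W|XY}$, $r_0\ge I(W\wedge X,Y)$, $r_2\ge H(Y\mid W)$ and $\delta\ge I(W\wedge Y\mid X)$. For $\mu\ge0$, $R_\mu(\delta\mid P_{XY}):=\min\{r_0+\mu r_2:(r_0,r_2)\in\mathcal{R}^*_{\mathtt{WAK}}(\delta\mid P_{XY})\}$, and $R_\mu(P_{XY}):=R_\mu(0\mid P_{XY})$. *)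

(* Defs.v *)
From HB Require Import structures.
From mathcomp Require Import all_boot all_order all_algebra.
From mathcomp Require Import all_classical all_reals all_analysis.
Set Implicit Arguments. Unset Strict Implicit. Unset Printing Implicit Defensive.
Import Order.TTheory GRing.Theory Num.Theory.
Local Open Scope ring_scope.
Local Open Scope classical_set_scope.

Section Defs.
Context {R : realType}.

Definition is_dist {T : finType} (p : T -> R) : Prop :=
  (forall t, 0 <= p t) /\ \sum_(t : T) p t = 1.

Definition ent {T : finType} (p : T -> R) : R :=
  - \sum_(t : T) (if p t == 0 then 0 else p t * ln (p t)).

Context {X Y : finType}.

(* (W,X,Y) ~ P_XY P_{W|XY}, with K xy w = P_{W|XY}(w | x y) *)
Section Joint.
Variables (W : finType) (P : X * Y -> R) (K : X * Y -> W -> R).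

Definition H_WXY := ent (fun t : W * (X * Y) => P t.2 * K t.2 t.1).
Definition H_W := ent (fun w : W => \sum_(xy : X * Y) P xy * K xy w).
Definition H_XY := ent P.
Definition H_X := ent (fun x : X => \sum_(y : Y) P (x, y)).
Definition H_WY :=
  ent (fun t : W * Y => \sum_(x : X) P (x, t.2) * K (x, t.2) t.1).
Definition H_WX :=
  ent (fun t : W * X => \sum_(y : Y) P (t.2, y) * K (t.2, y) t.1).

Definition MI_W_XY := H_W + H_XY - H_WXY.
Definition CH_Y_W := H_WY - H_W.
Definition CMI_W_Y_X := H_WX + H_XY - H_WXY - H_X.
End Joint.

Definition WAK_region (P : X * Y -> R) (delta : R) : set (R * R) :=
  [set r | exists (W : finType) (K : X * Y -> W -> R),
     [/\ (#|W| <= #|X| * #|Y| + 2)%N,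
         (forall xy, is_dist (K xy)),
         MI_W_XY P K <= r.1,
         CH_Y_W P K <= r.2 &
         CMI_W_Y_X P K <= delta]].

Definition R_mu (P : X * Y -> R) (mu delta : R) : R :=
  inf [set r.1 + mu * r.2 | r in WAK_region P delta].

End Defs.

(* Main.v *)
Require Import Defs.
From HB Require Import structures.
From mathcomp Require Import all_boot all_order all_algebra.
From mathcomp Require Import all_classical all_reals all_analysis.
From mathcomp Require Import ring lra.
Import Order.TTheory GRing.Theory Num.Theory.
Import numFieldNormedType.Exports.
Local Open Scope ring_scope.
Local Open Scope classical_set_scope.
Section S.
Context {R : realType}.
Lemma cont_proj (I : eqType) (i : I) : continuous (fun k : {ptws I -> R} => k i).
Proof. exact: (@proj_continuous I (fun _ => R) i). Qed.

Lemma cont_sum (T : topologicalType) (I : Type) (s : seq I) (F : I -> T -> R) :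
  (forall i, continuous (F i)) -> continuous (fun k => \sum_(i <- s) F i k).
Proof.
move=> hF; elim: s => [|a s IH].
  under eq_fun do rewrite big_nil; exact: cst_continuous.
under eq_fun do rewrite big_cons.
by move=> x; apply: cvgD; [exact: hF | exact: IH].
Qed.
Lemma xlnx_bound (t : R) : 0 < t -> t <= 1 -> `|t * ln t| <= 2 * Num.sqrt t.
Proof.
move=> t0 t1.
have s0 : 0 < Num.sqrt t by rewrite sqrtr_gt0.
set s := Num.sqrt t in s0 *.
have ts : t = s * s by rewrite /s -expr2 sqr_sqrtr // ltW.
have lt0 : t * ln t <= 0 by apply: mulr_ge0_le0; [exact: ltW | exact: ln_le0].
rewrite ler0_norm // ts lnM ?posrE //.
have h : ln (s^-1) < s^-1 by apply: ln_sublinear; rewrite invr_gt0.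
rewrite lnV ?posrE // in h.
have : s * (- ln s) <= 1.
  by rewrite -(mulfV (lt0r_neq0 s0)); apply: ler_wpM2l; [exact: ltW | exact: ltW].
nra.
Qed.
Lemma xlnx_cont : continuous (fun x : R => x * ln x).
Proof.
move=> x; case: (ltgtP x 0) => [x0|x0|->].
- apply: (near_cst_continuous 0); near=> y.
  rewrite ln0 ?mulr0 //; apply: ltW; near: y; exact: lt_nbhsl.
- apply: cvgM; [exact: cvg_id | exact: continuous_ln].
- rewrite /continuous_at ln0 // mulr0.
  apply/cvgrPdist_le => e e0.
  apply/nbhs_ballP; exists (Num.min 1 ((e / 2) ^+ 2)).
    by rewrite /= lt_min ltr01 /= exprn_gt0 // divr_gt0.
  idtac.
  move=> t /=; rewrite /ball /= sub0r normrN lt_min => /andP [t1 te].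
  rewrite sub0r normrN.
  case: (lerP t 0) => t0; first by rewrite ln0 // mulr0 normr0 ltW.
  have t1' : t <= 1 by rewrite -(gtr0_norm t0) ltW.
  have hb := @xlnx_bound t t0 t1'.
  have : Num.sqrt t <= e / 2.
    rewrite -(ger0_norm (ltW (divr_gt0 e0 (ltr0Sn _ 1)))) -sqrtr_sqr ler_sqrt.
      by rewrite -(gtr0_norm t0) ltW.
    by rewrite exprn_ge0 // ltW // divr_gt0.
  lra.
Unshelve. all: by end_near.
Qed.
Lemma ent_alt (T : finType) (q : T -> R) : ent q = - \sum_t q t * ln (q t).
Proof.
rewrite /ent; congr (- _); apply: eq_bigr => t _.
by case: eqP => // ->; rewrite mul0r.
Qed.

Lemma cont_ent (T : topologicalType) (Z : finType) (p : T -> Z -> R) :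
  (forall z, continuous (fun k => p k z)) -> continuous (fun k => ent (p k)).
Proof.
move=> hp; under eq_fun do rewrite ent_alt.
move=> x; apply: cvgN; apply: (@cont_sum T Z _ (fun z k => p k z * ln (p k z))).
move=> z y; apply: (@continuous_comp _ _ _ (fun k => p k z) (fun u : R => u * ln u)).
  exact: hp.
exact: xlnx_cont.
Qed.
Lemma key (T : topologicalType) (S : set T) (f g : T -> R) (m e : R) :
  compact S -> continuous f -> continuous g -> 0 < e ->
  (forall k, S k -> g k <= 0 -> m <= f k) ->
  exists2 d, 0 < d & forall k, S k -> g k <= d -> m - e <= f k.
Proof.
move=> cS cf cg e0 H.
set C := S `&` (f @^-1` [set x | x <= m - e]).
have cC : compact C.
  apply: compact_closedI => //; apply: preimage_closed; last exact: closed_le.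
  by move=> x _; exact: cf.
case: (pselect (C !=set0)) => [Cne|Cn].
  have [c /set_mem Cc cmin] := compact_EVT_min Cne cC (continuous_subspaceT cg).
  have gc0 : 0 < g c.
    rewrite ltNge; apply/negP => /(H c Cc.1) mf; have := Cc.2; rewrite /=; lra.
  exists (g c / 2); first by rewrite divr_gt0.
  move=> k Sk gk; rewrite leNgt; apply/negP => fk.
  have Ck : C k by split => //; rewrite /= ltW.
  have := cmin k (mem_set Ck); lra.
exists 1 => // k Sk _; rewrite leNgt; apply/negP => fk.
by apply: Cn; exists k; split => //; rewrite /= ltW.
Qed.

Lemma lbound_cont (T : topologicalType) (S : set T) (f : T -> R) :
  compact S -> continuous f -> exists B, forall k, S k -> B <= f k.
Proof.
move=> cS cf; case: (pselect (S !=set0)) => [Sne|Sn].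
  have [c _ cmin] := compact_EVT_min Sne cS (continuous_subspaceT cf).
  by exists (f c) => k Sk; apply: cmin; exact: mem_set.
by exists 0 => k Sk; exfalso; apply: Sn; exists k.
Qed.
Definition Sd (A B : finType) : set {ptws (A * B)%type -> R} :=
  [set k | forall a, is_dist (fun b => k (a, b))].

Lemma Sd_compact (A B : finType) : compact (Sd A B).
Proof.
have box := @tychonoff (A * B)%type (fun _ => R) (fun _ => `[0, 1]) (fun _ => @segment_compact R 0 1).
apply: (subclosed_compact _ box).
  have -> : Sd A B = \bigcap_(a in setT)
     ((\bigcap_(b in setT) [set k : {ptws (A * B)%type -> R} | 0 <= k (a, b)])
       `&` [set k | \sum_b k (a, b) = 1]).
    apply/seteqP; split => k /=.
      by move=> hk a _; split; [move=> b _; exact: (hk a).1 | exact: (hk a).2].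
    by move=> hk a; have [h1 h2] := hk a I; split => // b; exact: h1.
  apply: closed_bigI => a _; apply: closedI.
    apply: closed_bigI => b _.
    apply: (@preimage_closed _ _ (fun k : {ptws (A * B)%type -> R} => k (a, b)) [set x : R | 0 <= x]); last exact: closed_ge.
    by move=> x _; exact: cont_proj.
  apply: (@preimage_closed _ _ (fun k : {ptws (A * B)%type -> R} => \sum_b k (a, b)) [set x : R | x = 1]); last exact: closed_eq.
  move=> x _; refine (@cont_sum _ B (index_enum B) (fun b (k : {ptws (A * B)%type -> R}) => k (a, b)) (fun b => cont_proj _ (a, b)) x).
move=> k hk [a b]; have [h0 h1] := hk a; rewrite /= in_itv /= h0 /= -h1.
by rewrite (bigD1 b) //= lerDl sumr_ge0.
Qed.
Lemma cont_cproj (I : eqType) (c : R) (i : I) : continuous (fun k : {ptws I -> R} => c * k i).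
Proof.
move=> x.
have h1 := (@mulrl_continuous R c (x i)).
have h2 := (cont_proj _ i x).
have h3 := continuous_comp h2 h1.
exact: h3.
Qed.

Lemma contD (T : topologicalType) (f g : T -> R) :
  continuous f -> continuous g -> continuous (fun k => f k + g k).
Proof. by move=> hf hg x; apply: cvgD; [exact: hf | exact: hg]. Qed.
Lemma contN (T : topologicalType) (f : T -> R) :
  continuous f -> continuous (fun k => - f k).
Proof. by move=> hf x; apply: cvgN; exact: hf. Qed.
Lemma contC (T : topologicalType) (c : R) : continuous (fun _ : T => c).
Proof. by move=> x; exact: cvg_cst. Qed.
Lemma contcM (T : topologicalType) (c : R) (f : T -> R) :
  continuous f -> continuous (fun k => c * f k).
Proof.
move=> hf x; have h := continuous_comp (hf x) (@mulrl_continuous R c (f x)).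
exact: h.
Qed.
End S.

Section Info.
Context {R : realType} {X Y : finType} (P : X * Y -> R) (mu : R).
Definition PT n := {ptws ((X * Y) * 'I_n)%type -> R}.
Definition Kof {n} (k : PT n) : X * Y -> 'I_n -> R := fun xy w => k (xy, w).
Definition obj {n} (k : PT n) := MI_W_XY P (Kof k) + mu * CH_Y_W P (Kof k).
Definition cmi {n} (k : PT n) := CMI_W_Y_X P (Kof k).

Lemma cH_WXY n : continuous (fun k : PT n => H_WXY P (Kof k)).
Proof.
exact: (@cont_ent _ (PT n) _ (fun k t => P t.2 * k (t.2, t.1)) (fun t => cont_cproj _ (P t.2) (t.2, t.1))).
Qed.
Lemma cH_W n : continuous (fun k : PT n => H_W P (Kof k)).
Proof.
apply: (@cont_ent _ (PT n) _ (fun k w => \sum_(xy : X * Y) P xy * k (xy, w))) => w.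
exact: (@cont_sum _ (PT n) _ _ (fun xy k => P xy * k (xy, w)) (fun xy => cont_cproj _ (P xy) (xy, w))).
Qed.
Lemma cH_WY n : continuous (fun k : PT n => H_WY P (Kof k)).
Proof.
apply: (@cont_ent _ (PT n) _ (fun k t => \sum_(x : X) P (x, t.2) * k ((x, t.2), t.1))) => t.
exact: (@cont_sum _ (PT n) _ _ (fun x k => P (x, t.2) * k ((x, t.2), t.1)) (fun x => cont_cproj _ _ ((x, t.2), t.1))).
Qed.
Lemma cH_WX n : continuous (fun k : PT n => H_WX P (Kof k)).
Proof.
apply: (@cont_ent _ (PT n) _ (fun k t => \sum_(y : Y) P (t.2, y) * k ((t.2, y), t.1))) => t.
exact: (@cont_sum _ (PT n) _ _ (fun y k => P (t.2, y) * k ((t.2, y), t.1)) (fun y => cont_cproj _ _ ((t.2, y), t.1))).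
Qed.
Lemma cobj n : continuous (@obj n).
Proof.
apply: (@contD R (PT n) (fun k : PT n => H_W P (Kof k) + H_XY P - H_WXY P (Kof k))
   (fun k : PT n => mu * (H_WY P (Kof k) - H_W P (Kof k)))).
  apply: (@contD R (PT n) (fun k : PT n => H_W P (Kof k) + H_XY P) (fun k : PT n => - H_WXY P (Kof k))).
    apply: (@contD R (PT n) (fun k : PT n => H_W P (Kof k)) (fun k : PT n => H_XY P)).
      exact: cH_W.
    exact: contC.
  apply: (@contN R (PT n) (fun k : PT n => H_WXY P (Kof k))); exact: cH_WXY.
apply: (@contcM R (PT n) mu (fun k : PT n => H_WY P (Kof k) - H_W P (Kof k))).
apply: (@contD R (PT n) (fun k : PT n => H_WY P (Kof k)) (fun k : PT n => - H_W P (Kof k))).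
  exact: cH_WY.
apply: (@contN R (PT n) (fun k : PT n => H_W P (Kof k))); exact: cH_W.
Qed.
Lemma ccmi n : continuous (@cmi n).
Proof.
apply: (@contD R (PT n) (fun k : PT n => H_WX P (Kof k) + H_XY P - H_WXY P (Kof k)) (fun k : PT n => - H_X P)); last exact: contC.
apply: (@contD R (PT n) (fun k : PT n => H_WX P (Kof k) + H_XY P) (fun k : PT n => - H_WXY P (Kof k))).
  apply: (@contD R (PT n) (fun k : PT n => H_WX P (Kof k)) (fun k : PT n => H_XY P)).
    exact: cH_WX.
  exact: contC.
apply: (@contN R (PT n) (fun k : PT n => H_WXY P (Kof k))); exact: cH_WXY.
Qed.
End Info.
Section T.
Context {R : realType}.
Lemma ent_bij (A B : finType) (h : A -> B) (p : B -> R) :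
  bijective h -> ent (fun a => p (h a)) = ent p.
Proof.
move=> hb; rewrite !ent_alt; congr (- _).
by rewrite (reindex h) //; exact: onW_bij.
Qed.

Lemma bij_pair (W Z : finType) :
  bijective (fun t : 'I_#|W| * Z => (enum_val t.1, t.2)).
Proof.
exists (fun t : W * Z => (enum_rank t.1, t.2)).
  by case=> a b /=; rewrite enum_valK.
by case=> a b /=; rewrite enum_rankK.
Qed.

Lemma bij_snd1 (Z : finType) : bijective (fun t : 'I_1 * Z => t.2).
Proof.
exists (fun z : Z => (ord0, z)) => //.
by case=> a b /=; rewrite (ord1 a).
Qed.

Context {X Y : finType} (P : X * Y -> R).

Definition kof {W : finType} (K : X * Y -> W -> R) : PT (X:=X) (Y:=Y) #|W| :=
  fun i => K i.1 (enum_val i.2).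

Section Tr.
Variables (W : finType) (K : X * Y -> W -> R).
Lemma MI_kof : MI_W_XY P (Kof (kof K)) = MI_W_XY P K.
Proof.
rewrite /MI_W_XY /H_WXY /H_W.
rewrite -(ent_bij _ _ _ (fun t : W * (X * Y) => P t.2 * K t.2 t.1) (bij_pair W (X * Y)%type)).
by rewrite -(ent_bij _ _ _ (fun w : W => \sum_(xy : X * Y) P xy * K xy w) (enum_val_bij W)).
Qed.
Lemma CH_kof : CH_Y_W P (Kof (kof K)) = CH_Y_W P K.
Proof.
rewrite /CH_Y_W /H_WY /H_W.
rewrite -(ent_bij _ _ _ (fun t : W * Y => \sum_(x : X) P (x, t.2) * K (x, t.2) t.1) (bij_pair W Y)).
by rewrite -(ent_bij _ _ _ (fun w : W => \sum_(xy : X * Y) P xy * K xy w) (enum_val_bij W)).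
Qed.
Lemma CMI_kof : CMI_W_Y_X P (Kof (kof K)) = CMI_W_Y_X P K.
Proof.
rewrite /CMI_W_Y_X /H_WXY /H_WX.
rewrite -(ent_bij _ _ _ (fun t : W * (X * Y) => P t.2 * K t.2 t.1) (bij_pair W (X * Y)%type)).
by rewrite -(ent_bij _ _ _ (fun t : W * X => \sum_(y : Y) P (t.2, y) * K (t.2, y) t.1) (bij_pair W X)).
Qed.
Lemma Sd_kof : (forall xy, is_dist (K xy)) -> Sd (X * Y)%type 'I_#|W| (kof K).
Proof.
move=> hK xy; have [h0 h1] := hK xy; split => [b|]; first exact: h0.
by rewrite -h1 (reindex (@enum_val W W)) //; exact: onW_bij (enum_val_bij W).
Qed.
End Tr.

Lemma const_witness : CMI_W_Y_X P (fun (_ : X * Y) (_ : 'I_1) => 1 : R) = 0.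
Proof.
rewrite /CMI_W_Y_X /H_WXY /H_WX /H_XY /H_X.
rewrite -(ent_bij _ _ _ (P) (bij_snd1 (X * Y)%type)).
rewrite -(ent_bij _ _ _ (fun x : X => \sum_(y : Y) P (x, y)) (bij_snd1 X)).
have -> : (fun t : 'I_1 * X => \sum_(y : Y) P (t.2, y) * 1) = (fun t => \sum_(y : Y) P (t.2, y)).
  by apply: funext => t; apply: eq_bigr => y _; rewrite mulr1.
have -> : (fun t : 'I_1 * (X * Y) => P t.2 * 1) = (fun t => P t.2).
  by apply: funext => t; rewrite mulr1.
ring.
Qed.
End T.
Section Main.
Context {R : realType} {X Y : finType} (P : X * Y -> R) (mu : R).
Hypothesis mu0 : 0 <= mu.

Definition NN := (#|X| * #|Y| + 2)%N.
Definition VV (delta : R) := [set r.1 + mu * r.2 | r in WAK_region P delta].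

Lemma region_of_k n (k : PT (X:=X) (Y:=Y) n) (delta : R) :
  (n <= NN)%N -> Sd (X * Y)%type 'I_n k -> cmi P k <= delta ->
  WAK_region P delta (MI_W_XY P (Kof k), CH_Y_W P (Kof k)).
Proof.
move=> hn hk hc; exists 'I_n, (Kof k); split => //; first by rewrite card_ord.
Qed.

Lemma obj_in_VV n (k : PT (X:=X) (Y:=Y) n) (delta : R) :
  (n <= NN)%N -> Sd (X * Y)%type 'I_n k -> cmi P k <= delta -> VV delta (obj P mu k).
Proof. by move=> hn hk hc; exists (MI_W_XY P (Kof k), CH_Y_W P (Kof k)) => //; exact: region_of_k. Qed.

Lemma val_ge (delta v : R) : VV delta v ->
  exists n, exists k : PT (X:=X) (Y:=Y) n,
    [/\ (n <= NN)%N, Sd (X * Y)%type 'I_n k, cmi P k <= delta & obj P mu k <= v].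
Proof.
case=> r [W [K [hW hK h1 h2 h3]]] <-.
exists #|W|, (kof K); split => //.
- exact: Sd_kof.
- by rewrite /cmi CMI_kof.
- rewrite /obj MI_kof CH_kof; apply: lerD => //; exact: ler_wpM2l.
Qed.

Lemma lb_all : forall M, exists B, forall n, (n <= M)%N ->
  forall k : PT (X:=X) (Y:=Y) n, Sd (X * Y)%type 'I_n k -> B <= obj P mu k.
Proof.
elim=> [|M [B hB]].
  have [B hB] := lbound_cont _ _ _ (Sd_compact (X * Y)%type 'I_0) (cobj P mu 0).
  by exists B => n; rewrite leqn0 => /eqP nE; subst n.
have [B' hB'] := lbound_cont _ _ _ (Sd_compact (X * Y)%type 'I_M.+1) (cobj P mu M.+1).
exists (Num.min B B') => n; rewrite leq_eqVlt ltnS => /orP [/eqP nE|hn] k hk.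
  by subst n; rewrite ge_min hB' ?orbT.
by rewrite ge_min hB.
Qed.

Lemma d_all (Q : nat -> R -> Prop) : (forall n d d', 0 < d' -> d' <= d -> Q n d -> Q n d') ->
  forall M, (forall n, (n <= M)%N -> exists2 d, 0 < d & Q n d) ->
  exists2 d, 0 < d & forall n, (n <= M)%N -> Q n d.
Proof.
move=> Qmon; elim=> [|M IH] h.
  have [d d0 hd] := h 0%N (leqnn 0).
  by exists d => // n; rewrite leqn0 => /eqP ->.
have [d d0 hd] := IH (fun n hn => h n (leqW hn)).
have [d' d'0 hd'] := h M.+1 (leqnn _).
exists (Num.min d d'); first by rewrite lt_min d0 d'0.
move=> n; rewrite leq_eqVlt ltnS => /orP [/eqP ->|hn].
  by apply: (Qmon _ d' _ _ _ hd'); rewrite ?lt_min ?d0 ?d'0 ?ge_min ?lexx ?orbT.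
by apply: (Qmon _ d _ _ _ (hd n hn)); rewrite ?lt_min ?d0 ?d'0 ?ge_min ?lexx.
Qed.


Lemma main_sec : R_mu P mu delta @[delta --> 0^'+] --> R_mu P mu 0.
Proof.
have [B hB] := lb_all NN.
have lbV : forall delta v, VV delta v -> B <= v.
  move=> delta v /val_ge [n [k [hn hk _ hv]]]; exact: le_trans (hB n hn k hk) hv.
pose K1 := fun (_ : X * Y) (_ : 'I_1) => 1 : R.
have V0ne : VV 0 !=set0.
  exists (MI_W_XY P K1 + mu * CH_Y_W P K1), (MI_W_XY P K1, CH_Y_W P K1) => //.
  exists 'I_1, K1; split => //.
  - by rewrite card_ord /NN addn2.
  - by move=> xy; split => [w|]; [exact: ler01 | rewrite big_ord1].
  - by rewrite const_witness.
have sub0 : forall delta, 0 <= delta -> VV 0 `<=` VV delta.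
  move=> delta d0 v [r [W [K [hW hK h1 h2 h3]]] <-]; exists r => //.
  by exists W, K; split => //; exact: le_trans h3 d0.
have hlb : forall delta, has_lbound (VV delta).
  by move=> delta; exists B => v hv; exact: lbV hv.
have up : forall delta, 0 <= delta -> R_mu P mu delta <= R_mu P mu 0.
  move=> delta d0; change (inf (VV delta) <= inf (VV 0)).
  apply: lb_le_inf => // v hv.
  exact: ge_inf (hlb delta) _ (sub0 delta d0 v hv).
have low : forall e, 0 < e -> exists2 d, 0 < d & forall delta, 0 <= delta -> delta <= d ->
    R_mu P mu 0 - e <= R_mu P mu delta.
  move=> e e0.
  pose Q := fun n d => forall k : PT (X:=X) (Y:=Y) n, Sd (X * Y)%type 'I_n k -> cmi P k <= d ->
     inf (VV 0) - e <= obj P mu k.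
  have [d d0 hd] : exists2 d, 0 < d & forall n, (n <= NN)%N -> Q n d.
    apply: (@d_all Q).
      by move=> n d1 d2 _ h21 h k hk hc; apply: h => //; exact: le_trans hc h21.
    move=> n hn.
    apply: (@key R _ _ _ _ _ e (Sd_compact _ _) (cobj P mu n) (ccmi P n) e0) => k hk hc.
    apply: ge_inf (hlb 0) _ _; exact: obj_in_VV.
  exists d => // delta dl0 dld.
  change (inf (VV 0) - e <= inf (VV delta)); apply: lb_le_inf.
    by case: V0ne => v hv; exists v; exact: sub0.
  move=> v /val_ge [n [k [hn hk hc hv]]].
  exact: le_trans (hd n hn k hk (le_trans hc dld)) hv.
apply/cvgrPdist_le => e e0.
have [d d0 hd] := low e e0.
near=> delta.
have dl0 : 0 < delta by near: delta; exact: nbhs_right_gt.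
have dld : delta < d by near: delta; exact: nbhs_right_lt.
have h1 := up delta (ltW dl0).
have h2 := hd delta (ltW dl0) (ltW dld).
rewrite ler_norml; apply/andP; split; lra.
Unshelve. all: by end_near.
Qed.
End Main.

Theorem lemma3 (R : realType) (X Y : finType) (P : X * Y -> R) (mu : R) :
  is_dist P -> 0 <= mu ->
  R_mu P mu delta @[delta --> 0^'+] --> R_mu P mu 0.
Proof. by move=> _ mu0; exact: main_sec. Qed.
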